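(* Let $a\in\mathbb{R}$ and $\lambda\in[0,1)$, and let $f_{a,\lambda}=h+\overline{g}$ be the generalized harmonic quasiconformal Koebe function, i.e. $h,g$ are analytic in the unit disk $\mathbb{D}$ with $h(0)=g(0)=0$ and $$h(z)-g(z)=k_a(z),\qquad \frac{g'(z)}{h'(z)}=\lambda z\quad(z\in\mathbb{D}).$$ Then $f_{a,\lambda}$ is univalent in $\mathbb{D}$ if and only if $-2\le a\le 2$.
   Context: $\mathbb{D}=\{z\in\mathbb{C}:|z|<1\}$. For $a\in\mathbb{R}\setminus\{0\}$ the generalized Koebe function is $k_a(z)=\frac{1}{2a}\left[\left(\frac{1+z}{1-z}\right)^a-1\right]$ (principal branch; $\frac{1+z}{1-z}$ lies in the right half-plane), and $k_0(z)=\frac12\log\frac{1+z}{1-z}$ (the limit $a\to0$). The system determines $h,g$ uniquely, and $h'(0)=1$, $g'(0)=0$. *)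

(* Defs.v *)
(* Stdlib reals + Coquelicot complex numbers C = R * R.
   For f : C -> C, [is_derive f z l] is complex (C-linear) differentiability,
   since the scalar ring is C_AbsRing. *)
From Stdlib Require Import Reals.
From Coquelicot Require Import Coquelicot.
Open Scope R_scope.

Definition in_disk (z : C) : Prop := Cmod z < 1.

(* Principal argument of w, valid for w in the right half-plane Re w > 0
   (the only case used: w = (1+z)/(1-z), z in the disk). *)
Definition arg_rhp (w : C) : R := atan (Im w / Re w).

Definition Clog_rhp (w : C) : C := (ln (Cmod w), arg_rhp w).

Definition Cpow_rhp (w : C) (a : R) : C :=
  (Rpower (Cmod w) a * cos (a * arg_rhp w),
   Rpower (Cmod w) a * sin (a * arg_rhp w)).

Definition koebe (a : R) (z : C) : C :=
  let w := ((1 + z) / (1 - z))%C in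
  if Req_EM_T a 0 then ((/ 2)%R * Clog_rhp w)%C
  else ((/ (2 * a))%R * (Cpow_rhp w a - 1))%C.

Definition univalent_on_disk (f : C -> C) : Prop :=
  forall z w, in_disk z -> in_disk w -> f z = f w -> z = w.

(* Main.v *)
Require Import Defs.
From Stdlib Require Import Reals Lra Classical.
From Coquelicot Require Import Coquelicot.
Open Scope R_scope.


Definition Cdiff (F : C -> C) (z l : C) := forall eps, 0 < eps -> exists d, 0 < d /\
  forall y, Cmod (y - z) < d -> Cmod (F y - F z - (y - z) * l) <= eps * Cmod (y - z).

Lemma is_derive_Cdiff F z l : is_derive F z l -> Cdiff F z l.
Proof.
  intros [_ H] eps Heps.
  assert (Hl : is_filter_lim (locally z) z) by (intros P HP; exact HP).
  specialize (H z Hl (mkposreal eps Heps)).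
  destruct H as [d Hd].
  exists d; split; [apply cond_pos|].
  intros y Hy. specialize (Hd y).
  specialize (Hd Hy). exact Hd.
Qed.

Ltac cdestr := repeat match goal with | x : C |- _ => destruct x end.
Ltac ceq := cdestr; apply injective_projections; simpl; ring.

Lemma Cmod_conj_sub y z : Cmod (Cconj y - Cconj z) = Cmod (y - z).
Proof. rewrite <- Cmod_conj. f_equal. ceq. Qed.

Lemma Cdiff_conj F z l : Cdiff F (Cconj z) l ->
  Cdiff (fun y => Cconj (F (Cconj y))) z (Cconj l).
Proof.
  intros H eps Heps. destruct (H eps Heps) as [d [Hd H']]. exists d; split; auto.
  intros y Hy. rewrite <- Cmod_conj_sub in Hy. specialize (H' _ Hy).
  rewrite Cmod_conj_sub in H'.
  replace (Cconj (F (Cconj y)) - Cconj (F (Cconj z)) - (y - z) * Cconj l)%C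
    with (Cconj (F (Cconj y) - F (Cconj z) - (Cconj y - Cconj z) * l))%C.
  - rewrite Cmod_conj. exact H'.
  - generalize (F (Cconj y)) (F (Cconj z)). intros. ceq.
Qed.

Lemma Cdiff_minus F G z l1 l2 : Cdiff F z l1 -> Cdiff G z l2 ->
  Cdiff (fun y => F y - G y)%C z (l1 - l2)%C.
Proof.
  intros H1 H2 eps Heps.
  destruct (H1 (eps/2)) as [d1 [Hd1 H1']]; [lra|].
  destruct (H2 (eps/2)) as [d2 [Hd2 H2']]; [lra|].
  exists (Rmin d1 d2); split; [apply Rmin_pos; auto|].
  intros y Hy.
  assert (A1 := H1' y (Rlt_le_trans _ _ _ Hy (Rmin_l _ _))).
  assert (A2 := H2' y (Rlt_le_trans _ _ _ Hy (Rmin_r _ _))).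
  replace (F y - G y - (F z - G z) - (y - z) * (l1 - l2))%C with
    ((F y - F z - (y - z) * l1) + - (G y - G z - (y - z) * l2))%C.
  - eapply Rle_trans; [apply Cmod_triangle|]. rewrite Cmod_opp. lra.
  - generalize (F y) (F z) (G y) (G z). intros. ceq.
Qed.

Lemma Cdiff_zero_unique (F : C -> C) (z l : C) (r : R) : 0 < r -> (forall y, Cmod (y - z) < r -> F y = RtoC 0) ->
  Cdiff F z l -> l = 0%C.
Proof.
  intros Hr HF H. apply Cmod_eq_0.
  apply Rle_antisym; [|apply Cmod_ge_0].
  apply Rnot_lt_le; intro Hl.
  destruct (H (Cmod l / 2)) as [d [Hd H']]; [lra|].
  set (s := Rmin d r / 2).

  assert (Hs : 0 < s) by (unfold s; generalize (Rmin_pos d r Hd Hr); lra).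
  assert (Hsm : s < Rmin d r) by (unfold s; generalize (Rmin_pos d r Hd Hr); lra).
  assert (Ey : Cmod ((z + RtoC s) - z) = s).
  { replace ((z + RtoC s) - z)%C with (RtoC s) by ceq.
    rewrite Cmod_R, Rabs_pos_eq; lra. }
  assert (Hy : Cmod ((z + RtoC s) - z) < Rmin d r) by lra.
  specialize (H' _ (Rlt_le_trans _ _ _ Hy (Rmin_l _ _))).
  assert (Fz : F z = 0%C) by (apply HF; replace (z - z)%C with (RtoC 0) by ceq; rewrite Cmod_0; lra).
  rewrite Fz, (HF (z + RtoC s)%C (Rlt_le_trans _ _ _ Hy (Rmin_r _ _))) in H'.
  match type of H' with Cmod ?e <= _ => replace e with (- ((RtoC s) * l))%C in H' end.
  2:{ clearbody s. cdestr; apply injective_projections; simpl; ring. }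
  rewrite Cmod_opp, Cmod_mult, Ey in H'.
  rewrite Cmod_R, Rabs_pos_eq in H' by lra. nra.
Qed.

Lemma Cmod_le_sum (a b : R) : Cmod (a, b) <= Rabs a + Rabs b.
Proof.
  replace (a, b) with (RtoC a + Ci * RtoC b)%C by (apply injective_projections; simpl; ring).
  eapply Rle_trans; [apply Cmod_triangle|]. rewrite Cmod_mult, !Cmod_R.
  replace (Cmod Ci) with 1. lra. unfold Cmod, Ci; simpl. 
  replace (0 * (0 * 1) + 1 * (1 * 1)) with 1 by ring. rewrite sqrt_1; auto.
Qed.

Lemma Cmod_re (c : C) : Rabs (Re c) <= Cmod c.
Proof. apply re_le_Cmod. Qed.

Lemma Cmod_im (c : C) : Rabs (Im c) <= Cmod c.
Proof.
  replace (Im c) with (Re (c * (- Ci)))%C.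
  - eapply Rle_trans; [apply re_le_Cmod|]. rewrite Cmod_mult, Cmod_opp.
    replace (Cmod Ci) with 1. lra. unfold Cmod, Ci; simpl.
    replace (0 * (0 * 1) + 1 * (1 * 1)) with 1 by ring. rewrite sqrt_1; auto.
  - destruct c; simpl; ring.
Qed.

Lemma chain_est (F : C -> C) (l : C) (x y : R -> R) (t x' y' : R) :
  Cdiff F (x t, y t) l -> derivable_pt_lim x t x' -> derivable_pt_lim y t y' ->
  forall eps, 0 < eps -> exists d, 0 < d /\ forall hh, hh <> 0 -> Rabs hh < d ->
   Cmod (F (x (t + hh)%R, y (t + hh)%R) - F (x t, y t) - RtoC hh * (l * (x', y'))) <= eps * Rabs hh.
Proof.
  intros HF Hx Hy eps Heps.
  set (M := Cmod l). set (V := Cmod (x', y')).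
  assert (HM : 0 <= M) by apply Cmod_ge_0. assert (HV : 0 <= V) by apply Cmod_ge_0.
  destruct (HF (eps / (2 * (V + 2)))) as [d1 [Hd1 H1]].
  { apply Rdiv_lt_0_compat; lra. }
  set (e2 := Rmin 1 (eps / (4 * (M + 1)))).
  assert (He2 : 0 < e2) by (apply Rmin_pos; [lra| apply Rdiv_lt_0_compat; lra]).
  destruct (Hx e2 He2) as [dx Hdx]. destruct (Hy e2 He2) as [dy Hdy].
  exists (Rmin (Rmin dx dy) (d1 / (V + 2))). split.
  { apply Rmin_pos; [apply Rmin_pos; apply cond_pos| apply Rdiv_lt_0_compat; lra]. }
  intros hh Hh0 Hhd.
  assert (Hhx : Rabs hh < dx) by (eapply Rlt_le_trans; [exact Hhd|]; eapply Rle_trans; apply Rmin_l).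
  assert (Hhy : Rabs hh < dy) by (eapply Rlt_le_trans; [exact Hhd|]; eapply Rle_trans; [apply Rmin_l| apply Rmin_r]).
  assert (Hh1 : Rabs hh < d1 / (V + 2)) by (eapply Rlt_le_trans; [exact Hhd| apply Rmin_r]).
  assert (Hah : 0 < Rabs hh) by (apply Rabs_pos_lt; auto).
  specialize (Hdx hh Hh0 Hhx). specialize (Hdy hh Hh0 Hhy).
  set (rx := x (t + hh)%R - x t - hh * x'). set (ry := y (t + hh)%R - y t - hh * y').
  assert (Erx : Rabs rx <= e2 * Rabs hh).
  { replace rx with (((x (t + hh)%R - x t) / hh - x') * hh) by (unfold rx; field; auto).
    rewrite Rabs_mult. apply Rmult_le_compat_r; [apply Rabs_pos| lra]. }
  assert (Ery : Rabs ry <= e2 * Rabs hh).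
  { replace ry with (((y (t + hh)%R - y t) / hh - y') * hh) by (unfold ry; field; auto).
    rewrite Rabs_mult. apply Rmult_le_compat_r; [apply Rabs_pos| lra]. }
  assert (Hr : Cmod (rx, ry) <= 2 * e2 * Rabs hh) by (eapply Rle_trans; [apply Cmod_le_sum| lra]).
  assert (Edp : ((x (t + hh)%R, y (t + hh)%R) - (x t, y t))%C = (RtoC hh * (x', y') + (rx, ry))%C).
  { unfold rx, ry. apply injective_projections; simpl; ring. }
  assert (He21 : e2 <= 1) by apply Rmin_l.
  assert (Hdp : Cmod ((x (t + hh)%R, y (t + hh)%R) - (x t, y t)) <= Rabs hh * (V + 2)).
  { rewrite Edp. eapply Rle_trans; [apply Cmod_triangle|]. rewrite Cmod_mult, Cmod_R.
    fold V. nra. }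
  assert (Hdp1 : Cmod ((x (t + hh)%R, y (t + hh)%R) - (x t, y t)) < d1).
  { eapply Rle_lt_trans; [exact Hdp|].
    apply Rmult_lt_reg_r with (/ (V + 2)). apply Rinv_0_lt_compat; lra.
    rewrite Rmult_assoc, Rinv_r, Rmult_1_r by lra. exact Hh1. }
  specialize (H1 _ Hdp1).
  replace (F (x (t + hh)%R, y (t + hh)%R) - F (x t, y t) - RtoC hh * (l * (x', y')))%C with
   ((F (x (t + hh)%R, y (t + hh)%R) - F (x t, y t) - ((x (t + hh)%R, y (t + hh)%R) - (x t, y t)) * l) + (rx, ry) * l)%C.
  2:{ rewrite Edp. generalize (F (x (t + hh)%R, y (t + hh)%R)) (F (x t, y t)). intros. ceq. }
  eapply Rle_trans; [apply Cmod_triangle|]. rewrite Cmod_mult. fold M.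
  assert (A1 : eps / (2 * (V + 2)) * Cmod ((x (t + hh)%R, y (t + hh)%R) - (x t, y t)) <= eps / 2 * Rabs hh).
  { apply Rle_trans with (eps / (2 * (V + 2)) * (Rabs hh * (V + 2))).
    apply Rmult_le_compat_l; [apply Rlt_le, Rdiv_lt_0_compat; lra| exact Hdp].
    right. field. lra. }
  assert (He2b : e2 <= eps / (4 * (M + 1))) by apply Rmin_r.
  assert (A2 : Cmod (rx, ry) * M <= eps / 2 * Rabs hh).
  { apply Rle_trans with (2 * e2 * Rabs hh * M). apply Rmult_le_compat_r; auto.
    apply Rle_trans with (2 * (eps / (4 * (M + 1))) * Rabs hh * M).
    apply Rmult_le_compat_r; auto. apply Rmult_le_compat_r; [apply Rabs_pos| lra].
    apply Rle_trans with (2 * (eps / (4 * (M + 1))) * Rabs hh * (M + 1)).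
    apply Rmult_le_compat_l; [|lra]. apply Rmult_le_pos; [|apply Rabs_pos].
    apply Rmult_le_pos; [lra| apply Rlt_le, Rdiv_lt_0_compat; lra].
    right. field. lra. }
  lra.
Qed.

Lemma chain_re_im (F : C -> C) (l : C) (x y : R -> R) (t x' y' : R) :
  Cdiff F (x t, y t) l -> derivable_pt_lim x t x' -> derivable_pt_lim y t y' ->
  derivable_pt_lim (fun s => Re (F (x s, y s))) t (Re (l * (x', y'))) /\
  derivable_pt_lim (fun s => Im (F (x s, y s))) t (Im (l * (x', y'))).
Proof.
  intros HF Hx Hy. split; intros eps Heps;
  destruct (chain_est F l x y t x' y' HF Hx Hy (eps / 2)) as [d [Hd H]]; try lra;
  exists (mkposreal d Hd); intros hh Hh0 Hhd; simpl in Hhd; specialize (H hh Hh0 Hhd);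
  assert (Hah : 0 < Rabs hh) by (apply Rabs_pos_lt; auto).
  - set (D := (F (x (t + hh)%R, y (t + hh)%R) - F (x t, y t) - RtoC hh * (l * (x', y')))%C) in H.
    replace ((Re (F (x (t + hh)%R, y (t + hh)%R)) - Re (F (x t, y t))) / hh - Re (l * (x', y')))
      with (Re D / hh).
    + unfold Rdiv. rewrite Rabs_mult, Rabs_inv.
      apply Rle_lt_trans with (Cmod D * / Rabs hh).
      apply Rmult_le_compat_r; [left; apply Rinv_0_lt_compat; auto| apply re_le_Cmod].
      apply Rle_lt_trans with (eps / 2 * Rabs hh * / Rabs hh).
      apply Rmult_le_compat_r; [left; apply Rinv_0_lt_compat; auto| auto].
      field_simplify; lra.
    + unfold D. generalize (F (x (t + hh)%R, y (t + hh)%R)) (F (x t, y t)). intros c1 c2.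
      destruct c1, c2, l. simpl. field. auto.
  - set (D := (F (x (t + hh)%R, y (t + hh)%R) - F (x t, y t) - RtoC hh * (l * (x', y')))%C) in H.
    replace ((Im (F (x (t + hh)%R, y (t + hh)%R)) - Im (F (x t, y t))) / hh - Im (l * (x', y')))
      with (Im D / hh).
    + unfold Rdiv. rewrite Rabs_mult, Rabs_inv.
      apply Rle_lt_trans with (Cmod D * / Rabs hh).
      apply Rmult_le_compat_r; [left; apply Rinv_0_lt_compat; auto| apply Cmod_im].
      apply Rle_lt_trans with (eps / 2 * Rabs hh * / Rabs hh).
      apply Rmult_le_compat_r; [left; apply Rinv_0_lt_compat; auto| auto].
      field_simplify; lra.
    + unfold D. generalize (F (x (t + hh)%R, y (t + hh)%R)) (F (x t, y t)). intros c1 c2.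
      destruct c1, c2, l. simpl. field. auto.
Qed.

Lemma Cmod_scal_pair (s a b : R) : Cmod (s * a, s * b) = Rabs s * Cmod (a, b).
Proof.
  replace (s * a, s * b) with (RtoC s * (a, b))%C by (apply injective_projections; simpl; ring).
  rewrite Cmod_mult, Cmod_R. auto.
Qed.

Lemma zero_deriv_disk (u : C -> C) : (forall z, in_disk z -> Cdiff u z (RtoC 0)) ->
  u (RtoC 0) = RtoC 0 -> forall z, in_disk z -> u z = RtoC 0.
Proof.
  intros Hd H0 [a b] Hz.
  assert (Hin : forall s, 0 <= s <= 1 -> in_disk (s * a, s * b)).
  { intros s Hs. unfold in_disk in *. rewrite Cmod_scal_pair, Rabs_pos_eq by lra.
    assert (0 <= Cmod (a, b)) by apply Cmod_ge_0. nra. }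
  assert (Hder : forall s, 0 <= s <= 1 ->
    derivable_pt_lim (fun s => Re (u (s * a, s * b))) s 0 /\
    derivable_pt_lim (fun s => Im (u (s * a, s * b))) s 0).
  { intros s Hs.
    destruct (chain_re_im u (RtoC 0) (fun s => s * a) (fun s => s * b) s a b) as [A B].
    - apply Hd, Hin, Hs.
    - apply is_derive_Reals. auto_derive; auto; ring.
    - apply is_derive_Reals. auto_derive; auto; ring.
    - replace (Re (RtoC 0 * (a, b))) with 0 in A by (simpl; ring).
      replace (Im (RtoC 0 * (a, b))) with 0 in B by (simpl; ring). auto. }
  destruct (MVT_cor2 (fun s => Re (u (s * a, s * b))) (fun _ => 0) 0 1) as [c1 [E1 _]]; [lra| intros; apply Hder; auto|].
  destruct (MVT_cor2 (fun s => Im (u (s * a, s * b))) (fun _ => 0) 0 1) as [c2 [E2 _]]; [lra| intros; apply Hder; auto|].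
  simpl in E1, E2. rewrite !Rmult_1_l, !Rmult_0_l in E1, E2.
  change (0, 0) with (RtoC 0) in E1, E2. rewrite H0 in E1, E2. simpl in E1, E2.
  unfold Re, Im in *. apply injective_projections; simpl; lra.
Qed.


Definition KP (a X Y : R) : C :=
  if Req_EM_T a 0 then (X / 2, Y / 2)
  else ((exp (a * X) * cos (a * Y) - 1) / (2 * a), exp (a * X) * sin (a * Y) / (2 * a)).

Definition wmap (z : C) : C := ((1 + z) / (1 - z))%C.

Lemma koebe_KP a z : koebe a z = KP a (ln (Cmod (wmap z))) (arg_rhp (wmap z)).
Proof.
  unfold koebe, KP, wmap, Clog_rhp, Cpow_rhp, Rpower.
  destruct (Req_EM_T a 0) as [Ha|Ha].
  - apply injective_projections; simpl; field.
  - apply injective_projections; simpl; field; auto.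
Qed.

Definition Wp (X Y : R) : C := (exp X * cos Y, exp X * sin Y).

Definition zfun (X Y : R) : C :=
  let u := exp X * cos Y in let v := exp X * sin Y in
  ((u * u + v * v - 1) / ((u + 1) * (u + 1) + v * v), 2 * v / ((u + 1) * (u + 1) + v * v)).

Lemma zfun_eq X Y : 0 < cos Y -> (zfun X Y * (Wp X Y + 1) = Wp X Y - 1)%C.
Proof.
  intros Hc. unfold zfun, Wp.
  assert (Hu : 0 < exp X * cos Y) by (apply Rmult_lt_0_compat; auto; apply exp_pos).
  set (u := exp X * cos Y) in *. set (v := exp X * sin Y).
  assert (HD : (u + 1) * (u + 1) + v * v <> 0) by nra.
  apply injective_projections; simpl; field; auto.
Qed.

Lemma wmap_of_eq z W : (z * (W + 1) = W - 1)%C -> wmap z = W.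
Proof.
  intros H.
  assert (H2 : ((1 - z) * W = 1 + z)%C).
  { transitivity (W - (z * (W + 1) - z))%C. ring. rewrite H. ring. }
  assert (Hz : (1 - z)%C <> RtoC 0).
  { intro E. rewrite E in H2. rewrite Cmult_0_l in H2.
    assert (z = RtoC 1).
    { transitivity (1 - (1 - z))%C. ring. rewrite E. ring. }
    subst z. apply (f_equal Re) in H2. simpl in H2. lra. }
  unfold wmap. rewrite <- H2. field. auto.
Qed.

Lemma zfun_unique z X Y : 0 < cos Y -> (z * (Wp X Y + 1) = Wp X Y - 1)%C -> z = zfun X Y.
Proof.
  intros Hc H. assert (H' := zfun_eq X Y Hc).
  assert (Hn : (Wp X Y + 1)%C <> RtoC 0).
  { intro E. apply (f_equal Re) in E. unfold Wp in E; simpl in E.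
    assert (0 < exp X * cos Y) by (apply Rmult_lt_0_compat; auto; apply exp_pos). lra. }
  transitivity (z * (Wp X Y + 1) / (Wp X Y + 1))%C. field; auto.
  rewrite H, <- H'. field; auto.
Qed.

Lemma Cmod_pair p q : Cmod (p, q) = sqrt (p * p + q * q).
Proof. unfold Cmod; simpl. f_equal; ring. Qed.

Lemma Cmod_Wp X Y : Cmod (Wp X Y) = exp X.
Proof.
  unfold Wp. rewrite Cmod_pair.
  replace (exp X * cos Y * (exp X * cos Y) + exp X * sin Y * (exp X * sin Y))
    with (exp X * exp X * ((sin Y)² + (cos Y)²)) by (unfold Rsqr; ring).
  rewrite sin2_cos2, Rmult_1_r.
  rewrite sqrt_square; auto. left; apply exp_pos.
Qed.

Lemma cos_pos_of Y : - (PI / 2) < Y < PI / 2 -> 0 < cos Y.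
Proof. intros; apply cos_gt_0; lra. Qed.

Lemma arg_Wp X Y : - (PI / 2) < Y < PI / 2 -> arg_rhp (Wp X Y) = Y.
Proof.
  intros HY. assert (Hc := cos_pos_of Y HY). unfold arg_rhp, Wp; simpl.
  replace (exp X * sin Y / (exp X * cos Y)) with (tan Y).
  - apply atan_tan; lra.
  - unfold tan. field. split; [lra| apply Rgt_not_eq, exp_pos].
Qed.

Lemma koebe_zfun a X Y : - (PI / 2) < Y < PI / 2 -> koebe a (zfun X Y) = KP a X Y.
Proof.
  intros HY. rewrite koebe_KP.
  rewrite (wmap_of_eq (zfun X Y) (Wp X Y)) by (apply zfun_eq, cos_pos_of, HY).
  rewrite Cmod_Wp, ln_exp, arg_Wp; auto.
Qed.

Lemma zfun_disk X Y : 0 < cos Y -> in_disk (zfun X Y).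
Proof.
  intros Hc. unfold in_disk, zfun.
  assert (Hu : 0 < exp X * cos Y) by (apply Rmult_lt_0_compat; auto; apply exp_pos).
  set (u := exp X * cos Y) in *. set (v := exp X * sin Y).
  set (D := (u + 1) * (u + 1) + v * v).
  assert (HD : 0 < D) by (unfold D; nra).
  rewrite Cmod_pair. apply Rlt_le_trans with (sqrt 1); [|rewrite sqrt_1; lra]. apply sqrt_lt_1_alt. split.
  - apply Rplus_le_le_0_compat; apply Rle_0_sqr.
  - replace ((u * u + v * v - 1) / D * ((u * u + v * v - 1) / D) + 2 * v / D * (2 * v / D))
      with (((u * u + v * v - 1) * (u * u + v * v - 1) + 4 * v * v) / (D * D)) by (field; lra).
    apply Rmult_lt_reg_r with (D * D). nra.
    unfold Rdiv. rewrite Rmult_assoc, Rinv_l, Rmult_1_r, Rmult_1_l by nra.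
    unfold D. nra.
Qed.

Lemma disk_polar z : in_disk z -> exists X Y, - (PI / 2) < Y < PI / 2 /\ z = zfun X Y.
Proof.
  intros Hz. unfold in_disk in Hz.
  assert (Hz2 : Re z * Re z + Im z * Im z < 1).
  { assert (E := Cmod2_alt z). assert (0 <= Cmod z) by apply Cmod_ge_0. simpl in E. nra. }
  assert (Hz1 : (1 - z)%C <> RtoC 0).
  { intro E. apply (f_equal Re) in E. destruct z as [p q]; simpl in *. nra. }
  set (w := wmap z).
  assert (Hw : ((1 - z) * w = 1 + z)%C) by (unfold w, wmap; field; auto).
  assert (Hw1 : 0 < Re w).
  { clearbody w. destruct z as [p q]. destruct w as [w1 w2]. simpl in *.
    assert (E1 := f_equal fst Hw). assert (E2 := f_equal snd Hw). simpl in E1, E2.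
    assert (E : w1 * ((1 - p) * (1 - p) + q * q) = 1 - p * p - q * q).
    { transitivity ((1 - p) * ((1 + - p) * w1 - (0 + - q) * w2) - q * ((1 + - p) * w2 + (0 + - q) * w1)); [ring|].
      rewrite E1, E2; ring. }
    assert (p < 1) by nra.
    assert (0 < (1 - p) * (1 - p) + q * q) by nra. nra. }
  set (X := ln (Cmod w)). set (Y := atan (Im w / Re w)).
  assert (HY : - (PI / 2) < Y < PI / 2) by (destruct (atan_bound (Im w / Re w)); unfold Y; lra).
  exists X, Y. split; auto.
  assert (HW : Wp X Y = w).
  { unfold Wp, X, Y. destruct w as [w1 w2]. simpl in *.
    assert (Hm : 0 < Cmod (w1, w2)) by (rewrite Cmod_pair; apply sqrt_lt_R0; nra).
    rewrite exp_ln by auto. rewrite cos_atan, sin_atan. rewrite Cmod_pair.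
    assert (Hs : sqrt (w1 * w1 + w2 * w2) = w1 * sqrt (1 + (w2 / w1)²)).
    { replace (w1 * w1 + w2 * w2) with ((w1 * w1) * (1 + (w2 / w1)²)) by (unfold Rsqr; field; lra).
      rewrite sqrt_mult_alt by nra. rewrite sqrt_square by lra. auto. }
    assert (Hp : 0 < sqrt (1 + (w2 / w1)²)) by (apply sqrt_lt_R0; generalize (Rle_0_sqr (w2/w1)); lra).
    rewrite Hs. apply injective_projections; simpl; field; lra. }
  apply zfun_unique. apply cos_pos_of; auto.
  rewrite HW. transitivity (w - ((1 - z) * w - (1 + z)) - 1 + (1 - 1))%C. ring.
  rewrite Hw. ring.
Qed.


Lemma deriv_unique_loc (f1 f2 : R -> R) t l1 l2 r : 0 < r ->
  (forall s, Rabs (s - t) < r -> f1 s = f2 s) ->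
  derivable_pt_lim f1 t l1 -> derivable_pt_lim f2 t l2 -> l1 = l2.
Proof.
  intros Hr Heq H1 H2. apply is_derive_Reals in H1. apply is_derive_Reals in H2.
  assert (H1' : is_derive f2 t l1).
  { apply is_derive_ext_loc with f1; auto. exists (mkposreal r Hr). intros s Hs. apply Heq. exact Hs. }
  apply is_derive_unique in H1'. apply is_derive_unique in H2. congruence.
Qed.

Lemma D_pos X Y : 0 < cos Y -> (exp X * cos Y + 1) * (exp X * cos Y + 1) + exp X * sin Y * (exp X * sin Y) <> 0.
Proof.
  intros Hc. assert (0 < exp X * cos Y) by (apply Rmult_lt_0_compat; auto; apply exp_pos). nra.
Qed.

Lemma core (a lam : R) (h g h' g' : C -> C) (X Y X' Y' E E' : R -> R) :
  0 <= lam < 1 ->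
  (forall z, in_disk z -> Cdiff h z (h' z)) ->
  (forall z, in_disk z -> Cdiff g z (g' z)) ->
  (forall z, in_disk z -> (h z - g z)%C = koebe a z) ->
  (forall z, in_disk z -> h' z <> RtoC 0 /\ (g' z / h' z)%C = (RtoC lam * z)%C) ->
  (forall t, 0 <= t <= 1 -> derivable_pt_lim X t (X' t) /\ derivable_pt_lim Y t (Y' t) /\
      - (PI / 2) < Y t < PI / 2 /\ Re (KP a (X t) (Y t)) = E t /\
      Im (KP a (X t) (Y t)) = Im (KP a (X 0) (Y 0))) ->
  (forall t, 0 < t < 1 -> derivable_pt_lim E t (E' t) /\ E' t <> 0) ->
  Re (h (zfun (X 0) (Y 0))) + Re (g (zfun (X 0) (Y 0))) <>
  Re (h (zfun (X 1) (Y 1))) + Re (g (zfun (X 1) (Y 1))).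
Proof.
  intros Hlam Hh Hg Hk Hq Hpath HE.
  set (px := fun s => fst (zfun (X s) (Y s))). set (py := fun s => snd (zfun (X s) (Y s))).
  assert (Hpz : forall s, zfun (X s) (Y s) = (px s, py s)) by (intros; apply surjective_pairing).
  assert (Hdisk : forall t, 0 <= t <= 1 -> in_disk (px t, py t)).
  { intros t Ht. rewrite <- Hpz. apply zfun_disk, cos_pos_of. apply Hpath; auto. }
  assert (Hpd : forall t, 0 <= t <= 1 -> derivable_pt_lim px t (Derive px t) /\ derivable_pt_lim py t (Derive py t)).
  { intros t Ht. destruct (Hpath t Ht) as [HX [HY [HYb _]]].
    apply is_derive_Reals in HX. apply is_derive_Reals in HY.
    assert (Hc := D_pos (X t) (Y t) (cos_pos_of _ HYb)).
    split; apply is_derive_Reals, Derive_correct; unfold px, py, zfun; simpl; auto_derive;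
      repeat split; auto; eexists; eauto. }
  set (v := fun t => (Derive px t, Derive py t)).
  set (phi := fun s => Re (h (px s, py s)) + Re (g (px s, py s))).
  set (phi' := fun t => Re (h' (px t, py t) * v t) + Re (g' (px t, py t) * v t)).
  assert (Hchain : forall t, 0 <= t <= 1 ->
    (derivable_pt_lim (fun s => Re (h (px s, py s))) t (Re (h' (px t, py t) * v t)) /\
     derivable_pt_lim (fun s => Im (h (px s, py s))) t (Im (h' (px t, py t) * v t))) /\
    (derivable_pt_lim (fun s => Re (g (px s, py s))) t (Re (g' (px t, py t) * v t)) /\
     derivable_pt_lim (fun s => Im (g (px s, py s))) t (Im (g' (px t, py t) * v t)))).
  { intros t Ht. destruct (Hpd t Ht) as [D1 D2]. split; apply chain_re_im; auto. }
  destruct (MVT_cor2 phi phi' 0 1) as [c [Ec Hc]]; [lra| |].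
  { intros t Ht. destruct (Hchain t Ht) as [[A1 _] [B1 _]]. apply derivable_pt_lim_plus; auto. }
  unfold phi in Ec. rewrite !Hpz. intro Heq. rewrite Heq in Ec.
  assert (Hphi0 : phi' c = 0) by lra. clear Ec Heq.
  assert (Hc01 : 0 <= c <= 1) by lra.
  destruct (Hchain c Hc01) as [[A1 A2] [B1 B2]].
  destruct (HE c Hc) as [HEd HEnz].
  set (r := Rmin c (1 - c)).
  assert (Hr : 0 < r) by (apply Rmin_pos; lra).
  assert (Hloc : forall s, Rabs (s - c) < r -> 0 <= s <= 1).
  { intros s Hs. assert (r <= c) by apply Rmin_l. assert (r <= 1 - c) by apply Rmin_r.
    apply Rabs_def2 in Hs. lra. }
  assert (Hkre : forall s, 0 <= s <= 1 ->
     Re (h (px s, py s)) - Re (g (px s, py s)) = E s /\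
     Im (h (px s, py s)) - Im (g (px s, py s)) = Im (KP a (X 0) (Y 0))).
  { intros s Hs. destruct (Hpath s Hs) as [_ [_ [HYb [HEs HIs]]]].
    rewrite <- HEs, <- HIs, <- koebe_zfun by auto. rewrite Hpz, <- Hk by (apply Hdisk; auto).
    generalize (h (px s, py s)) (g (px s, py s)). intros [] []. simpl. split; ring. }
  assert (U1 : Re (h' (px c, py c) * v c) - Re (g' (px c, py c) * v c) = E' c).
  { apply (deriv_unique_loc (fun s => Re (h (px s, py s)) - Re (g (px s, py s))) E c _ _ r Hr).
    - intros s Hs. apply Hkre, Hloc, Hs.
    - apply derivable_pt_lim_minus; auto.
    - auto. }
  assert (U2 : Im (h' (px c, py c) * v c) - Im (g' (px c, py c) * v c) = 0).
  { apply (deriv_unique_loc (fun s => Im (h (px s, py s)) - Im (g (px s, py s))) (fun _ => Im (KP a (X 0) (Y 0))) c _ _ r Hr).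
    - intros s Hs. apply Hkre, Hloc, Hs.
    - apply derivable_pt_lim_minus; auto.
    - apply derivable_pt_lim_const. }
  destruct (Hq _ (Hdisk c Hc01)) as [Hh0 Hgh].
  assert (Hg' : g' (px c, py c) = (RtoC lam * (px c, py c) * h' (px c, py c))%C).
  { rewrite <- Hgh. field. auto. }
  assert (Hqm : Cmod (RtoC lam * (px c, py c)) < 1).
  { rewrite Cmod_mult, Cmod_R, Rabs_pos_eq by lra. assert (Hd := Hdisk c Hc01). unfold in_disk in Hd.
    assert (0 <= Cmod (px c, py c)) by apply Cmod_ge_0. nra. }
  unfold phi' in Hphi0. rewrite Hg' in Hphi0, U1, U2.
  set (q := (RtoC lam * (px c, py c))%C) in *. clearbody q.
  assert (Hq2 : Re q * Re q + Im q * Im q < 1).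
  { assert (Ee := Cmod2_alt q). assert (0 <= Cmod q) by apply Cmod_ge_0. simpl in Ee. nra. }
  set (A := (h' (px c, py c) * v c)%C).
  replace (q * h' (px c, py c) * v c)%C with (q * A)%C in Hphi0, U1, U2 by (unfold A; ring).
  replace (h' (px c, py c) * v c)%C with A in Hphi0, U1, U2 by reflexivity.
  clearbody A. destruct A as [a1 a2]. destruct q as [q1 q2]. simpl in *.
  assert (Hid : (a1 * (1 + q1) - a2 * q2) * ((1 - q1) * (1 - q1) + q2 * q2) =
     (a1 * (1 - q1) + a2 * q2) * (1 - q1 * q1 - q2 * q2) - 2 * q2 * (a2 * (1 - q1) - a1 * q2)) by ring.
  assert (Ha : a2 * (1 - q1) - a1 * q2 = 0) by lra.
  assert (Hb : a1 * (1 - q1) + a2 * q2 = E' c) by lra.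
  assert (Hz : a1 * (1 + q1) - a2 * q2 = 0) by lra.
  rewrite Hz, Ha, Hb in Hid.
  assert (E' c * (1 - q1 * q1 - q2 * q2) = 0) by lra.
  apply Rmult_integral in H. destruct H; [auto| lra].
Qed.


Lemma dpl_of_ex f t : ex_derive f t -> derivable_pt_lim f t (Derive f t).
Proof. intros H. apply is_derive_Reals, Derive_correct, H. Qed.

Lemma sin_sign x : - PI < x < PI -> (0 < sin x -> 0 < x) /\ (sin x < 0 -> x < 0).
Proof.
  intros Hx. split; intros Hs.
  - destruct (Rlt_or_le 0 x) as [H|H]; auto. exfalso.
    destruct (Req_dec x 0) as [->|Hn]. rewrite sin_0 in Hs; lra.
    assert (sin x < 0) by (apply sin_lt_0_var; lra). lra.
  - destruct (Rlt_or_le x 0) as [H|H]; auto. exfalso.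
    destruct (Req_dec x 0) as [->|Hn]. rewrite sin_0 in Hs; lra.
    assert (0 < sin x) by (apply sin_gt_0; lra). lra.
Qed.

Lemma pos_factor e s : 0 < e -> 0 < e * s -> 0 < s.
Proof. intros. destruct (Rle_or_lt s 0); auto. nra. Qed.
Lemma neg_factor e s : 0 < e -> e * s < 0 -> s < 0.
Proof. intros. destruct (Rle_or_lt 0 s); auto. nra. Qed.

Lemma convex_int lo hi A B t : lo < A < hi -> lo < B < hi -> 0 <= t <= 1 ->
  lo < (1 - t) * A + t * B < hi.
Proof.
  intros HA HB Ht.
  replace ((1 - t) * A + t * B) with (A + t * (B - A)) by ring.
  destruct (Rle_or_lt A B); split; nra.
Qed.

Section IfDir.
Variables (a lam : R) (h g h' g' : C -> C).
Hypothesis Hlam : 0 <= lam < 1.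
Hypothesis Hh : forall z, in_disk z -> Cdiff h z (h' z).
Hypothesis Hg : forall z, in_disk z -> Cdiff g z (g' z).
Hypothesis Hk : forall z, in_disk z -> (h z - g z)%C = koebe a z.
Hypothesis Hq : forall z, in_disk z -> h' z <> RtoC 0 /\ (g' z / h' z)%C = (RtoC lam * z)%C.

Lemma if_dir : -2 <= a <= 2 -> univalent_on_disk (fun z => (h z + Cconj (g z))%C).
Proof.
  intros Ha z1 z2 H1 H2 Hf.
  destruct (disk_polar z1 H1) as [X1 [Y1 [HY1 E1]]].
  destruct (disk_polar z2 H2) as [X2 [Y2 [HY2 E2]]].
  assert (HRe : Re (h z1) + Re (g z1) = Re (h z2) + Re (g z2)).
  { apply (f_equal Re) in Hf. simpl in Hf. exact Hf. }
  assert (HIm : Im (KP a X1 Y1) = Im (KP a X2 Y2)).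
  { apply (f_equal Im) in Hf. simpl in Hf.
    rewrite <- (koebe_zfun a X1 Y1 HY1), <- (koebe_zfun a X2 Y2 HY2), <- E1, <- E2, <- Hk, <- Hk by auto.
    simpl. lra. }
  subst z1 z2.
  destruct (classic (X1 = X2 /\ Y1 = Y2)) as [[-> ->]|Hne]; auto. exfalso.
  unfold KP in HIm. destruct (Req_EM_T a 0) as [Ha0|Ha0].
  -
    simpl in HIm. assert (Y1 = Y2) by lra. subst Y2.
    assert (HX : X1 <> X2) by (intro; apply Hne; auto).
    assert (Hc := core a lam h g h' g' (fun t => X1 + t * (X2 - X1)) (fun _ => Y1)
       (fun _ => X2 - X1) (fun _ => 0) (fun t => (X1 + t * (X2 - X1)) / 2) (fun _ => (X2 - X1) / 2)
       Hlam Hh Hg Hk Hq).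
    simpl in Hc. replace (X1 + 0 * (X2 - X1)) with X1 in Hc by ring.
    replace (X1 + 1 * (X2 - X1)) with X2 in Hc by ring.
    apply Hc; clear Hc.
    + intros t Ht. unfold KP. destruct (Req_EM_T a 0) as [_|]; [|contradiction].
      simpl. repeat split; auto; try lra.
      * apply is_derive_Reals. auto_derive; auto; ring.
      * apply is_derive_Reals. auto_derive; auto; ring.
    + intros t Ht. split; [|lra]. apply is_derive_Reals. auto_derive; auto; field.
    + exact HRe.
  - simpl in HIm.
    assert (HaY1 : - PI < a * Y1 < PI) by (split; nra).
    assert (HaY2 : - PI < a * Y2 < PI) by (split; nra).
    set (c := exp (a * X1) * sin (a * Y1)).
    assert (Hc2 : exp (a * X2) * sin (a * Y2) = c).
    { unfold c. apply Rmult_eq_reg_r with (/ (2 * a)). rewrite <- !Rdiv_def. lra.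
      apply Rinv_neq_0_compat. lra. }
    assert (He1 := exp_pos (a * X1)). assert (He2 := exp_pos (a * X2)).
    destruct (Req_dec c 0) as [Hc0|Hc0].
    +
      assert (Hs0 : forall x, - PI < x < PI -> sin x = 0 -> x = 0).
      { intros x Hx Hs. destruct (sin_sign x Hx) as [S1 S2].
        destruct (Rtotal_order x 0) as [Hl|[He|Hg']]; auto.
        - assert (sin x < 0) by (apply sin_lt_0_var; lra). lra.
        - assert (0 < sin x) by (apply sin_gt_0; lra). lra. }
      assert (Y1 = 0).
      { assert (a * Y1 = 0). apply Hs0; auto. unfold c in Hc0. nra.
        apply Rmult_integral in H. destruct H; [contradiction| auto]. }
      assert (Y2 = 0).
      { assert (a * Y2 = 0). apply Hs0; auto. rewrite Hc0 in Hc2. nra.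
        apply Rmult_integral in H0. destruct H0; [contradiction| auto]. }
      subst Y1 Y2.
      assert (HX : X1 <> X2) by (intro; apply Hne; auto).
      assert (Hc := core a lam h g h' g' (fun t => X1 + t * (X2 - X1)) (fun _ => 0)
         (fun _ => X2 - X1) (fun _ => 0)
         (fun t => (exp (a * (X1 + t * (X2 - X1))) * cos (a * 0) - 1) / (2 * a))
         (fun t => (X2 - X1) * exp (a * (X1 + t * (X2 - X1))) * cos (a * 0) / 2)
         Hlam Hh Hg Hk Hq).
      simpl in Hc. replace (X1 + 0 * (X2 - X1)) with X1 in Hc by ring.
      replace (X1 + 1 * (X2 - X1)) with X2 in Hc by ring.
      apply Hc; clear Hc.
      * intros t Ht. unfold KP. destruct (Req_EM_T a 0) as [|_]; [contradiction|].
        simpl. rewrite !Rmult_0_r, !sin_0. repeat split; auto; try lra.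
        -- apply is_derive_Reals. auto_derive; auto; ring.
        -- apply is_derive_Reals. auto_derive; auto; ring.
      * intros t Ht. rewrite !Rmult_0_r, cos_0. split.
        -- apply is_derive_Reals. auto_derive; auto. field. auto.
        -- assert (Hep : 0 < exp (a * (X1 + t * (X2 - X1)))) by apply exp_pos.
           intro Hz. assert (Hz2 : (X2 - X1) * exp (a * (X1 + t * (X2 - X1))) = 0) by lra.
           apply Rmult_integral in Hz2. destruct Hz2; lra.
      * exact HRe.
    +
      assert (HY : Y1 <> Y2).
      { intro HYe. subst Y2. apply Hne. split; auto.
        assert (exp (a * X1) = exp (a * X2)).
        { assert (sin (a * Y1) <> 0) by (intro Hs; apply Hc0; unfold c; rewrite Hs; ring).
          apply Rmult_eq_reg_r with (sin (a * Y1)); [|auto]. fold c. lra. }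
        apply exp_inv in H. apply Rmult_eq_reg_l with a; auto. }
      set (Yt := fun t => Y1 + t * (Y2 - Y1)).
      assert (Hsn : forall t, 0 <= t <= 1 -> 0 < c / sin (a * Yt t) /\ sin (a * Yt t) <> 0).
      { intros t Ht. destruct (sin_sign _ HaY1) as [S11 S12]. destruct (sin_sign _ HaY2) as [S21 S22].
        assert (Hat : a * Yt t = (1 - t) * (a * Y1) + t * (a * Y2)) by (unfold Yt; ring).
        destruct (Rlt_or_le 0 c) as [Hcp|Hcn].
        - assert (0 < sin (a * Y1)) by (apply (pos_factor (exp (a * X1))); auto).
          assert (0 < sin (a * Y2)) by (apply (pos_factor (exp (a * X2))); auto; rewrite Hc2; auto).
          assert (0 < a * Y1) by auto. assert (0 < a * Y2) by auto.
          assert (Hcv := convex_int 0 PI (a * Y1) (a * Y2) t ltac:(lra) ltac:(lra) Ht).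
          assert (0 < sin (a * Yt t)) by (apply sin_gt_0; rewrite Hat; lra).
          split; [apply Rdiv_lt_0_compat|]; lra.
        - assert (Hcn' : c < 0) by lra.
          assert (sin (a * Y1) < 0) by (apply (neg_factor (exp (a * X1))); auto).
          assert (sin (a * Y2) < 0) by (apply (neg_factor (exp (a * X2))); auto; rewrite Hc2; auto).
          assert (a * Y1 < 0) by auto. assert (a * Y2 < 0) by auto.
          assert (Hcv := convex_int (- PI) 0 (a * Y1) (a * Y2) t ltac:(lra) ltac:(lra) Ht).
          assert (sin (a * Yt t) < 0) by (apply sin_lt_0_var; rewrite Hat; lra).
          split; [|lra]. assert (0 < - c / - sin (a * Yt t)) by (apply Rdiv_lt_0_compat; lra).
          replace (c / sin (a * Yt t)) with (- c / - sin (a * Yt t)) by (field; lra). auto.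
      }
      set (Xt := fun t => ln (c / sin (a * Yt t)) / a).
      assert (HX0 : Xt 0 = X1).
      { unfold Xt, Yt. replace (Y1 + 0 * (Y2 - Y1)) with Y1 by ring.
        replace (c / sin (a * Y1)) with (exp (a * X1)).
        rewrite ln_exp. field; auto.
        assert (sin (a * Y1) <> 0) by (intro Hs; apply Hc0; unfold c; rewrite Hs; ring).
        unfold c. field. auto. }
      assert (HX1 : Xt 1 = X2).
      { unfold Xt, Yt. replace (Y1 + 1 * (Y2 - Y1)) with Y2 by ring.
        replace (c / sin (a * Y2)) with (exp (a * X2)).
        rewrite ln_exp. field; auto.
        assert (sin (a * Y2) <> 0) by (intro Hs; apply Hc0; rewrite <- Hc2, Hs; ring).
        rewrite <- Hc2. field. auto. }
      assert (HYt0 : Yt 0 = Y1) by (unfold Yt; ring).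
      assert (HYt1 : Yt 1 = Y2) by (unfold Yt; ring).
      assert (HexpX : forall t, 0 <= t <= 1 -> exp (a * Xt t) = c / sin (a * Yt t)).
      { intros t Ht. unfold Xt. replace (a * (ln (c / sin (a * Yt t)) / a)) with (ln (c / sin (a * Yt t))) by (field; auto).
        apply exp_ln. apply Hsn; auto. }
      assert (HImt : forall t, 0 <= t <= 1 -> Im (KP a (Xt t) (Yt t)) = c / (2 * a)).
      { intros t Ht. unfold KP. destruct (Req_EM_T a 0) as [|_]; [contradiction|]. simpl.
        rewrite HexpX by auto. field. split; auto. apply Hsn; auto. }
      assert (Hc := core a lam h g h' g' Xt Yt (fun t => Derive Xt t) (fun _ => Y2 - Y1)
         (fun t => (c * cos (a * Yt t) / sin (a * Yt t) - 1) / (2 * a))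
         (fun t => - c * (Y2 - Y1) / (2 * (sin (a * Yt t) * sin (a * Yt t))))
         Hlam Hh Hg Hk Hq).
      rewrite HX0, HX1, HYt0, HYt1 in Hc.
      apply Hc; clear Hc.
      * intros t Ht. destruct (Hsn t Ht) as [Hs1 Hs2]. split; [|split; [|split; [|split]]].
        -- apply dpl_of_ex. unfold Xt, Yt. auto_derive. split; [exact Hs2| split; [exact Hs1| exact I]].
        -- apply is_derive_Reals. unfold Yt. auto_derive; auto; ring.
        -- assert (Hcv := convex_int (- (PI / 2)) (PI / 2) Y1 Y2 t HY1 HY2 Ht).
           unfold Yt. replace (Y1 + t * (Y2 - Y1)) with ((1 - t) * Y1 + t * Y2) by ring. exact Hcv.
        -- unfold KP. destruct (Req_EM_T a 0) as [|_]; [contradiction|]. simpl.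
           rewrite HexpX by auto. field. split; auto.
        -- rewrite HImt by auto. rewrite <- HYt0, <- HX0. rewrite HImt by lra. auto.
      * intros t Ht. assert (Ht' : 0 <= t <= 1) by lra. destruct (Hsn t Ht') as [Hs1 Hs2]. split.
        -- apply is_derive_Reals. unfold Yt in *. auto_derive. exact Hs2.
           set (u := a * (Y1 + t * (Y2 - Y1))) in *.
           assert (Hsc : sin u * sin u + cos u * cos u = 1) by (generalize (sin2_cos2 u); unfold Rsqr; auto).
           transitivity (- c * (Y2 - Y1) * (sin u * sin u + cos u * cos u) / (2 * (sin u * sin u))).
           field; auto. rewrite Hsc. field. auto.
        -- intro Hz. assert (Hs3 : sin (a * Yt t) * sin (a * Yt t) <> 0) by (apply Rmult_integral_contrapositive; auto).
           assert (Hz' : - c * (Y2 - Y1) = 0).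
           { replace (- c * (Y2 - Y1)) with (- c * (Y2 - Y1) / (2 * (sin (a * Yt t) * sin (a * Yt t))) * (2 * (sin (a * Yt t) * sin (a * Yt t)))) by (field; auto).
             rewrite Hz. ring. }
           apply Rmult_integral in Hz'. destruct Hz'; [apply Hc0; lra| apply HY; lra].
      * exact HRe.
Qed.
End IfDir.


Lemma zfun_conj X Y : Cconj (zfun X Y) = zfun X (- Y).
Proof.
  unfold zfun. rewrite cos_neg, sin_neg.
  set (u := exp X * cos Y). set (v := exp X * sin Y).
  replace (exp X * - sin Y) with (- v) by (unfold v; ring).
  replace (- v * - v) with (v * v) by ring.
  unfold Cconj; simpl. apply injective_projections; simpl; unfold Rdiv; ring.
Qed.

Lemma KP_conj a X Y : KP a X (- Y) = Cconj (KP a X Y).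
Proof.
  unfold KP, Cconj. destruct (Req_EM_T a 0); simpl.
  - apply injective_projections; simpl; field.
  - replace (a * - Y) with (- (a * Y)) by ring. rewrite cos_neg, sin_neg.
    apply injective_projections; simpl; field; auto.
Qed.

Lemma koebe_conj a z : in_disk z -> koebe a (Cconj z) = Cconj (koebe a z).
Proof.
  intros Hz. destruct (disk_polar z Hz) as [X [Y [HY ->]]].
  rewrite zfun_conj, !koebe_zfun by lra. apply KP_conj.
Qed.

Lemma disk_conj z : in_disk z -> in_disk (Cconj z).
Proof. unfold in_disk. rewrite Cmod_conj. auto. Qed.

Lemma disk_nbhd z : in_disk z -> forall y, Cmod (y - z) < 1 - Cmod z -> in_disk y.
Proof.
  intros Hz y Hy. unfold in_disk in *.
  replace y with ((y - z) + z)%C by ring.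
  eapply Rle_lt_trans; [apply Cmod_triangle|]. lra.
Qed.

Section OnlyIf.
Variables (a lam : R) (h g h' g' : C -> C).
Hypothesis Hlam : 0 <= lam < 1.
Hypothesis Hh : forall z, in_disk z -> Cdiff h z (h' z).
Hypothesis Hg : forall z, in_disk z -> Cdiff g z (g' z).
Hypothesis Hh0 : h (RtoC 0) = RtoC 0.
Hypothesis Hg0 : g (RtoC 0) = RtoC 0.
Hypothesis Hk : forall z, in_disk z -> (h z - g z)%C = koebe a z.
Hypothesis Hq : forall z, in_disk z -> h' z <> RtoC 0 /\ (g' z / h' z)%C = (RtoC lam * z)%C.

Let H z := Cconj (h (Cconj z)).
Let Gg z := Cconj (g (Cconj z)).
Let H' z := Cconj (h' (Cconj z)).
Let Gg' z := Cconj (g' (Cconj z)).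

Lemma g'_eq z : in_disk z -> g' z = (RtoC lam * z * h' z)%C.
Proof. intros Hz. destruct (Hq z Hz) as [A B]. rewrite <- B. field. auto. Qed.

Lemma sym_derivs z : in_disk z -> h' z = H' z /\ g' z = Gg' z.
Proof.
  intros Hz.
  assert (Hc := disk_conj z Hz).
  assert (DH : Cdiff H z (H' z)).
  { unfold H, H'. apply Cdiff_conj. apply Hh; auto. }
  assert (DG : Cdiff Gg z (Gg' z)).
  { unfold Gg, Gg'. apply Cdiff_conj. apply Hg; auto. }
  assert (D := Cdiff_minus _ _ _ _ _ (Cdiff_minus _ _ _ _ _ (Hh z Hz) (Hg z Hz)) (Cdiff_minus _ _ _ _ _ DH DG)).
  assert (Hr : 0 < 1 - Cmod z) by (unfold in_disk in Hz; lra).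
  assert (Hnb : forall y, Cmod (y - z) < 1 - Cmod z -> ((h y - g y) - (H y - Gg y))%C = RtoC 0).
  { intros y Hy. assert (Hy' := disk_nbhd z Hz y Hy).
    rewrite Hk by auto. unfold H, Gg.
    replace (Cconj (h (Cconj y)) - Cconj (g (Cconj y)))%C with (Cconj (h (Cconj y) - g (Cconj y)))%C by (rewrite Cminus_conj; auto).
    rewrite Hk by (apply disk_conj; auto). rewrite koebe_conj, Cconj_conj by auto. ring. }
  assert (Z := Cdiff_zero_unique _ _ _ _ Hr Hnb D).
  assert (E1 : g' z = (RtoC lam * z * h' z)%C) by (apply g'_eq; auto).
  assert (E2 : Gg' z = (RtoC lam * z * H' z)%C).
  { unfold Gg', H'. rewrite g'_eq by auto. rewrite !Cmult_conj, Cconj_conj.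
    f_equal. f_equal. unfold Cconj, RtoC; simpl. apply injective_projections; simpl; ring. }
  rewrite E1, E2 in Z.
  assert (Z' : ((h' z - H' z) * (1 - RtoC lam * z))%C = RtoC 0).
  { rewrite <- Z. ring. }
  assert (Hnz : (1 - RtoC lam * z)%C <> RtoC 0).
  { intro E. assert (Cmod (RtoC lam * z) = 1).
    { replace (RtoC lam * z)%C with (RtoC 1 - (1 - RtoC lam * z))%C by ring. rewrite E.
      replace (RtoC 1 - RtoC 0)%C with (RtoC 1) by ring. apply Cmod_1. }
    rewrite Cmod_mult, Cmod_R, Rabs_pos_eq in H0 by lra. unfold in_disk in Hz.
    assert (0 <= Cmod z) by apply Cmod_ge_0. nra. }
  assert (Hd : (h' z - H' z)%C = RtoC 0).
  { destruct (Ceq_dec (h' z - H' z)%C (RtoC 0)) as [e|n]; auto.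
    exfalso. apply (Cmult_neq_0 _ _ n Hnz). auto. }
  split.
  - transitivity ((h' z - H' z) + H' z)%C. ring. rewrite Hd. ring.
  - rewrite E1, E2. transitivity (RtoC lam * z * ((h' z - H' z) + H' z))%C. ring. rewrite Hd. ring.
Qed.

Lemma sym_funs z : in_disk z -> h z = H z /\ g z = Gg z.
Proof.
  intros Hz. split.
  - assert (U := zero_deriv_disk (fun y => h y - H y)%C).
    assert (U' : (h z - H z)%C = RtoC 0).
    { apply U; auto.
      - intros y Hy. replace (RtoC 0) with (h' y - H' y)%C.
        apply Cdiff_minus. apply Hh; auto. unfold H, H'. apply Cdiff_conj, Hh, disk_conj; auto.
        destruct (sym_derivs y Hy) as [->  _]. ring.
      - unfold H. replace (Cconj (RtoC 0)) with (RtoC 0) by (unfold Cconj, RtoC; simpl; f_equal; ring).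
        rewrite Hh0. unfold Cconj, RtoC; simpl. apply injective_projections; simpl; ring. }
    transitivity ((h z - H z) + H z)%C. ring. rewrite U'. ring.
  - assert (U := zero_deriv_disk (fun y => g y - Gg y)%C).
    assert (U' : (g z - Gg z)%C = RtoC 0).
    { apply U; auto.
      - intros y Hy. replace (RtoC 0) with (g' y - Gg' y)%C.
        apply Cdiff_minus. apply Hg; auto. unfold Gg, Gg'. apply Cdiff_conj, Hg, disk_conj; auto.
        destruct (sym_derivs y Hy) as [_ ->]. ring.
      - unfold Gg. replace (Cconj (RtoC 0)) with (RtoC 0) by (unfold Cconj, RtoC; simpl; f_equal; ring).
        rewrite Hg0. unfold Cconj, RtoC; simpl. apply injective_projections; simpl; ring. }
    transitivity ((g z - Gg z) + Gg z)%C. ring. rewrite U'. ring.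
Qed.

End OnlyIf.

Lemma only_if (a lam : R) (h g h' g' : C -> C) :
  0 <= lam < 1 ->
  (forall z, in_disk z -> Cdiff h z (h' z)) ->
  (forall z, in_disk z -> Cdiff g z (g' z)) ->
  h (RtoC 0) = RtoC 0 -> g (RtoC 0) = RtoC 0 ->
  (forall z, in_disk z -> (h z - g z)%C = koebe a z) ->
  (forall z, in_disk z -> h' z <> RtoC 0 /\ (g' z / h' z)%C = (RtoC lam * z)%C) ->
  univalent_on_disk (fun z => (h z + Cconj (g z))%C) -> -2 <= a <= 2.
Proof.
  intros Hlam Hh Hg Hh0 Hg0 Hk Hq Hu.
  destruct (classic (-2 <= a <= 2)) as [|Hna]; auto. exfalso.
  assert (Ha : 2 < Rabs a).
  { destruct (Rle_or_lt 0 a); [rewrite Rabs_pos_eq by lra| rewrite Rabs_left by lra];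
    apply Rnot_le_lt; intro; apply Hna; lra. }
  assert (Ha0 : a <> 0) by (intro; subst; rewrite Rabs_R0 in Ha; lra).
  assert (HPI := PI_RGT_0).
  set (th := PI / a).
  assert (Hth : - (PI / 2) < th < PI / 2).
  { unfold th. destruct (Rle_or_lt 0 a).
    - rewrite Rabs_pos_eq in Ha by lra. split.
      + assert (0 < PI / a) by (apply Rdiv_lt_0_compat; lra). lra.
      + assert (/ a < / 2) by (apply Rinv_lt_contravar; nra).
        unfold Rdiv. apply Rmult_lt_compat_l; lra.
    - rewrite Rabs_left in Ha by lra. split.
      + assert (/ - a < / 2) by (apply Rinv_lt_contravar; nra).
        replace (PI / a) with (- (PI * / - a)) by (field; lra).
        assert (PI * / - a < PI * / 2) by (apply Rmult_lt_compat_l; lra). unfold Rdiv in *. lra.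
      + assert (PI / a < 0). { unfold Rdiv. apply Rmult_pos_neg; [lra| apply Rinv_lt_0_compat; lra]. } lra. }
  assert (Hsth : sin th <> 0).
  { destruct (Rle_or_lt 0 a).
    - assert (0 < th) by (apply Rdiv_lt_0_compat; lra).
      assert (0 < sin th) by (apply sin_gt_0; lra). lra.
    - assert (th < 0). { unfold th, Rdiv. apply Rmult_pos_neg; [lra| apply Rinv_lt_0_compat; lra]. }
      assert (sin th < 0) by (apply sin_lt_0_var; lra). lra. }
  set (zs := zfun 0 th).
  assert (Hzs : in_disk zs) by (apply zfun_disk, cos_pos_of; auto).
  assert (Hczs : in_disk (Cconj zs)) by (apply disk_conj; auto).
  assert (HIm : Im (koebe a zs) = 0).
  { unfold zs. rewrite koebe_zfun by auto. unfold KP. destruct (Req_EM_T a 0); [contradiction|].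
    simpl. replace (a * th) with PI by (unfold th; field; auto). rewrite sin_PI. field. auto. }
  destruct (sym_funs a lam h g h' g' Hlam Hh Hg Hh0 Hg0 Hk Hq zs Hzs) as [S1 S2].
  simpl in S1, S2.
  assert (T1 : h (Cconj zs) = Cconj (h zs)) by (rewrite S1, Cconj_conj; auto).
  assert (T2 : Cconj (g (Cconj zs)) = g zs) by (rewrite S2; auto).
  rewrite <- Hk in HIm by auto.
  assert (Heq : (h (Cconj zs) + Cconj (g (Cconj zs)))%C = (h zs + Cconj (g zs))%C).
  { rewrite T1, T2. revert HIm. generalize (h zs) (g zs). intros [p1 p2] [q1 q2] HI.
    simpl in HI. unfold Cconj; simpl. apply injective_projections; simpl; lra. }
  assert (E := Hu _ _ Hczs Hzs Heq).
  apply (f_equal Im) in E. simpl in E. unfold zs, zfun in E. simpl in E.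
  rewrite exp_0, !Rmult_1_l in E.
  assert (HD := D_pos 0 th (cos_pos_of _ Hth)). rewrite exp_0, !Rmult_1_l in HD.
  assert (Z : 2 * sin th / ((cos th + 1) * (cos th + 1) + sin th * sin th) = 0) by lra.
  apply Hsth. apply Rmult_eq_reg_r with (2 / ((cos th + 1) * (cos th + 1) + sin th * sin th)).
  rewrite Rmult_0_l. rewrite <- Z. field. auto.
  apply Rmult_integral_contrapositive. split; [lra| apply Rinv_neq_0_compat; auto].
Qed.


Theorem theorem2p1 (a lam : R) (h g h' g' : C -> C) :
  0 <= lam < 1 ->
  (forall z, in_disk z -> is_derive h z (h' z)) ->
  (forall z, in_disk z -> is_derive g z (g' z)) ->
  h 0%C = 0%C -> g 0%C = 0%C ->
  (forall z, in_disk z -> (h z - g z)%C = koebe a z) ->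
  (forall z, in_disk z -> h' z <> 0%C /\ (g' z / h' z)%C = (RtoC lam * z)%C) ->
  (univalent_on_disk (fun z => (h z + Cconj (g z))%C) <-> -2 <= a <= 2).
Proof.
  intros Hlam Hh Hg Hh0 Hg0 Hk Hq.
  assert (Hh' : forall z, in_disk z -> Cdiff h z (h' z)) by (intros; apply is_derive_Cdiff; auto).
  assert (Hg' : forall z, in_disk z -> Cdiff g z (g' z)) by (intros; apply is_derive_Cdiff; auto).
  split.
  - apply (only_if a lam h g h' g'); auto.
  - apply (if_dir a lam h g h' g'); auto.
Qed.
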